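(* Let $\mu$ be a positive finite Borel measure on $\mathbb{R}^d$ and $0<\beta\le d$, and assume there exist $\varphi\in L^2(\mu)$ with $\|\varphi\|_{L^2(\mu)}>0$ and a constant $C>0$ such that $|(\varphi\mu)^\wedge(t)|\le C|t|^{-\beta/2}$ for all $t\in\mathbb{R}^d$. Let $\Lambda\subset\mathbb{R}^d$ be countable such that $E(\Lambda)$ is a Fourier frame for $L^2(\mu)$. If $\alpha$ is a real number for which there is a constant $C'$ with $\#\big(\Lambda\cap B(0,r)\big)\le C' r^\alpha$ for all $r\ge1$, then $$\alpha\ge\Big(\frac1\beta+\frac1d\Big)^{-1}.$$
   Context: For a finite complex measure $\nu$ on $\mathbb{R}^d$, $\widehat{\nu}(t)=\int e^{-2\pi i\langle t,x\rangle}d\nu(x)$; $\varphi\mu$ denotes the complex measure with density $\varphi$ with respect to $\mu$. For $\lambda\in\mathbb{R}^d$, $e_\lambda(x)=e^{2\pi i\langle\lambda,x\rangle}$, $E(\Lambda)=\{e_\lambda\}_{\lambda\in\Lambda}$. $E(\Lambda)$ is a Fourier frame for $L^2(\mu)$ if there are $0<A,B<\infty$ with $A\|f\|^2_{L^2(\mu)}\le\sum_{\lambda\in\Lambda}|\langle f,e_\lambda\rangle_{L^2(\mu)}|^2\le B\|f\|^2_{L^2(\mu)}$ for all $f\in L^2(\mu)$. $B(x,r)$ is the open ball of radius $r$ centered at $x$. *)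

(* Defs.v *)
From HB Require Import structures.
From mathcomp Require Import all_boot all_order all_algebra.
From mathcomp Require Import all_classical all_reals all_analysis.
Set Implicit Arguments. Unset Strict Implicit. Unset Printing Implicit Defensive.
Import Order.TTheory GRing.Theory Num.Theory.
Import numFieldNormedType.Exports.
Local Open Scope classical_set_scope.
Local Open Scope ring_scope.

(* R^d as row vectors, with its Borel sigma-algebra (generated by the open
   sets of the product topology, which is the Euclidean topology). *)
Definition Rd (R : realType) (d : nat) := g_sigma_algebraType (@open 'rV[R]_d).

Definition dotp (R : realType) (d : nat) (x y : 'rV[R]_d) : R :=
  \sum_(i < d) x ord0 i * y ord0 i.
Definition enorm (R : realType) (d : nat) (x : 'rV[R]_d) : R :=
  Num.sqrt (dotp x x).
Definition eball0 (R : realType) (d : nat) (r : R) : set 'rV[R]_d :=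
  [set x | enorm x < r].

(* Complex numbers as pairs (real part, imaginary part). *)
Definition cmul (R : realType) (z w : R * R) : R * R :=
  (z.1 * w.1 - z.2 * w.2, z.1 * w.2 + z.2 * w.1).
Definition cconj (R : realType) (z : R * R) : R * R := (z.1, - z.2).
Definition cabs2 (R : realType) (z : R * R) : R := z.1 ^+ 2 + z.2 ^+ 2.
Definition cabs (R : realType) (z : R * R) : R := Num.sqrt (cabs2 z).

Definition cintegral (R : realType) (d : nat)
    (mu : {measure set (Rd R d) -> \bar R}) (f : Rd R d -> R * R) : R * R :=
  (Rintegral mu setT (fun x => (f x).1), Rintegral mu setT (fun x => (f x).2)).

Definition in_L2 (R : realType) (d : nat)
    (mu : {measure set (Rd R d) -> \bar R}) (f : Rd R d -> R * R) : Prop :=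
  [/\ measurable_fun setT (fun x => (f x).1),
      measurable_fun setT (fun x => (f x).2) &
      (\int[mu]_x (cabs2 (f x))%:E < +oo)%E].

Definition L2norm2 (R : realType) (d : nat)
    (mu : {measure set (Rd R d) -> \bar R}) (f : Rd R d -> R * R) : \bar R :=
  (\int[mu]_x (cabs2 (f x))%:E)%E.

Definition L2inner (R : realType) (d : nat)
    (mu : {measure set (Rd R d) -> \bar R}) (f g : Rd R d -> R * R) : R * R :=
  cintegral mu (fun x => cmul (f x) (cconj (g x))).

Definition expo (R : realType) (d : nat) (lam : 'rV[R]_d) : Rd R d -> R * R :=
  fun x => (cos (2 * pi * dotp lam x), sin (2 * pi * dotp lam x)).

Definition fourier_meas (R : realType) (d : nat)
    (mu : {measure set (Rd R d) -> \bar R}) (phi : Rd R d -> R * R)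
    (t : 'rV[R]_d) : R * R :=
  cintegral mu (fun x =>
    cmul (cos (- (2 * pi * dotp t x)), sin (- (2 * pi * dotp t x))) (phi x)).

Definition fourier_frame (R : realType) (d : nat)
    (mu : {measure set (Rd R d) -> \bar R}) (Lam : set 'rV[R]_d) : Prop :=
  exists A B : R, [/\ 0 < A, 0 < B &
    forall f : Rd R d -> R * R, in_L2 mu f ->
      (A%:E * L2norm2 mu f
         <= \esum_(lam in Lam) (cabs2 (L2inner mu f (expo lam)))%:E)%E /\
      (\esum_(lam in Lam) (cabs2 (L2inner mu f (expo lam)))%:E
         <= B%:E * L2norm2 mu f)%E].

Definition count_in (R : realType) (d : nat) (S : set 'rV[R]_d) : \bar R :=
  (\esum_(x in S) 1)%E.

(* Main.v *)
Require Import Defs.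
From HB Require Import structures.
From mathcomp Require Import all_boot all_order all_algebra.
From mathcomp Require Import all_classical all_reals all_analysis.
From mathcomp Require Import lra ring.
Import Order.TTheory GRing.Theory Num.Theory.
Import numFieldNormedType.Exports.
Local Open Scope classical_set_scope.
Local Open Scope ring_scope.
Set Implicit Arguments. Unset Strict Implicit.

Section S.
Variables (R : realType) (d : nat).

Definition box (r : R) (x : 'rV[R]_d) := forall i : 'I_d, `|x ord0 i| < r.

Lemma dotp_ge0 (x : 'rV[R]_d) : 0 <= dotp x x.
Proof. by apply: sumr_ge0 => i _; rewrite -expr2 sqr_ge0. Qed.

Lemma enorm_ge_coord (x : 'rV[R]_d) i : `|x ord0 i| <= enorm x.
Proof.
rewrite /enorm -sqrtr_sqr ler_sqrt ?dotp_ge0 // /dotp (bigD1 i) //= expr2.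
by rewrite lerDl; apply: sumr_ge0 => j _; rewrite -expr2 sqr_ge0.
Qed.

Lemma box_ball (r : R) (x : 'rV[R]_d) : (0 < d)%N -> 0 < r -> box r x ->
  enorm x < d%:R * r.
Proof.
move=> d0 r0 bx.
have h : dotp x x < d%:R * r ^+ 2.
  have -> : d%:R * r ^+ 2 = \sum_(i < d) r * r.
    by rewrite sumr_const card_ord mulr_natl expr2.
  rewrite /dotp; apply: ltr_sum.
    by apply/hasP; exists (Ordinal d0); rewrite ?mem_index_enum.
  move=> i _; have := bx i => h.
  rewrite -expr2 -[r * r]expr2 -real_normK ?num_real //.
  by rewrite ltrXn2r // ?normr_ge0 ?(ltW r0).
have dr0 : 0 < d%:R * r by rewrite mulr_gt0 // ltr0n.
rewrite /enorm -(gtr0_norm dr0) -sqrtr_sqr ltr_sqrt ?exprn_gt0 //.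
apply: (lt_le_trans h); rewrite exprMn ler_wpM2r ?exprn_ge0 ?(ltW r0) //.
by rewrite expr2 ler_peMr ?ler0n // ler1n.
Qed.

End S.

Section S.
Variables (R : realType) (d : nat).

Lemma enorm0 : enorm (0 : 'rV[R]_d) = 0.
Proof. by rewrite /enorm /dotp big1 ?sqrtr0 // => i _; rewrite mxE mul0r. Qed.

Lemma cabs2_ge0 (z : R * R) : 0 <= cabs2 z.
Proof. by rewrite /cabs2 addr_ge0 ?sqr_ge0. Qed.

Lemma decay (F : 'rV[R]_d -> R * R) (C beta : R) :
  0 <= C -> 0 < beta ->
  (forall t : 'rV[R]_d, t != 0 -> cabs (F t) <= C * enorm t `^ (- (beta / 2))) ->
  forall (s : 'rV[R]_d) (delta : R), 0 < delta -> delta <= enorm s ->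
  cabs2 (F s) <= C ^+ 2 * expR (- beta * ln delta).
Proof.
move=> C0 b0 hF s del del0 dels.
have e0 : 0 < enorm s by exact: lt_le_trans dels.
have s0 : s != 0 by apply/eqP => s0; move: e0; rewrite s0 enorm0 ltxx.
have := hF s s0; rewrite /powR gt_eqF // => h.
have -> : cabs2 (F s) = cabs (F s) ^+ 2 by rewrite /cabs sqr_sqrtr ?cabs2_ge0.
apply: (le_trans (y := (C * expR (- (beta / 2) * ln (enorm s))) ^+ 2)).
  by rewrite lerXn2r // ?nnegrE ?sqrtr_ge0 ?mulr_ge0 ?expR_ge0.
rewrite exprMn ler_wpM2l ?exprn_ge0 // -expRM_natr ler_expR.
have -> : - (beta / 2) * ln (enorm s) * 2%:R = - beta * ln (enorm s).
  by rewrite mulrAC; congr (_ * _); rewrite mulNr -mulrA mulVf ?mulr1 ?pnatr_eq0.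
by rewrite !mulNr lerN2 ler_wpM2l ?(ltW b0) // ler_ln.
Qed.

End S.

Section S.
Variables (R : realType) (d : nat).

Lemma count_ge_fsum (S X : set 'rV[R]_d) : finite_set X -> X `<=` S ->
  (\sum_(x \in X) (1 : \bar R) <= count_in S)%E.
Proof. by move=> fX XS; apply: esum_ge; exists X. Qed.

Lemma key (Lam : set 'rV[R]_d) (g : 'rV[R]_d -> R) (kf : 'rV[R]_d -> nat)
    (c N : nat -> R) (B : nat -> set 'rV[R]_d) (S : R) :
  (forall k, 0 <= c k) ->
  (forall x, Lam x -> [/\ B (kf x) x, 0 <= g x & g x <= c (kf x)]) ->
  (forall k, (count_in (Lam `&` B k) <= (N k)%:E)%E) ->
  (forall n, \sum_(k < n) c k * N k <= S) ->
  (\esum_(x in Lam) (g x)%:E <= S%:E)%E.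
Proof.
move=> c0 hL hN hS.
apply: ge_ereal_sup => /= _ [X [finX XL]] <-.
rewrite fsbig_finite //= sumEFin lee_fin.

pose ind (k : nat) (x : 'rV[R]_d) : R := if x \in B k then 1 else 0.
pose n := (\max_(x <- finmap.enum_fset (fset_set X)) kf x).+1.
apply: (le_trans (y := \sum_(x <- finmap.enum_fset (fset_set X)) \sum_(k < n) c k * ind k x)).
  rewrite big_seq [X in _ <= X]big_seq; apply: ler_sum => x xs.
  have Xx : X x by move: xs; rewrite in_fset_set // => /set_mem.
  have [Bx g0 gc] := hL x (XL x Xx).
  have kn : (kf x < n)%N by rewrite ltnS; apply: leq_bigmax_seq.
  rewrite (bigD1 (Ordinal kn)) //= /ind.
  have -> : (x \in B (kf x)) = true by apply/mem_set.
  rewrite mulr1; apply: ler_wpDr => //.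
  by apply: sumr_ge0 => k _; apply: mulr_ge0 => //; rewrite /ind; case: ifP.
rewrite exchange_big /=; apply: le_trans (hS n).
apply: ler_sum => k _; rewrite -mulr_sumr; apply: ler_wpM2l => //.
rewrite -lee_fin; apply: le_trans (hN k).
rewrite -sumEFin -fsbig_finite //.
have -> : \sum_(i \in X) (ind k i)%:E = \sum_(i \in X) (if i \in B k then (1 : \bar R) else 0)%E.
  by apply: eq_fsbigr => x _; rewrite /ind; case: ifP.
rewrite -fsbig_mkcondr; apply: count_ge_fsum; first exact: finite_setIl.
by move=> x [Xx Bx]; split => //; apply: XL.
Qed.

End S.

Section S.
Variables (R : realType) (d : nat).

Lemma nat_close (a b : nat) : `|a%:R - b%:R : R| < 1 -> a = b.
Proof.
have H (m n : nat) : (m < n)%N -> 1 <= `|m%:R - n%:R : R|.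
  move=> mn; rewrite distrC -natrB; last exact: ltnW.
  by rewrite normr_nat ler1n subn_gt0.
move=> h; case: (ltngtP a b) => // hab.
  by move: (H _ _ hab); rewrite leNgt h.
by move: (H _ _ hab); rewrite distrC leNgt h.
Qed.

Definition grid (rho : R) (K : nat) (j : {ffun 'I_d -> 'I_K}) : 'rV[R]_d :=
  \row_i (2 * rho * (j i)%:R).
Arguments grid rho {K} j.

Lemma grid_bound (rho : R) (K : nat) (j : {ffun 'I_d -> 'I_K}) i : 0 < rho ->
  `|grid rho j ord0 i| <= 2 * rho * K%:R.
Proof.
move=> r0; have r2 : 0 <= 2 * rho by rewrite mulr_ge0 // ltW.
rewrite /grid mxE ger0_norm; last by rewrite mulr_ge0.
apply: ler_wpM2l => //; rewrite ler_nat; exact: ltnW.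
Qed.

Lemma pigeon (Lam : set 'rV[R]_d) (rho : R) (K : nat) : 0 < rho -> (0 < K)%N ->
  (count_in (Lam `&` box (4 * rho * K%:R)%R) < ((K ^ d)%:R)%:E)%E ->
  exists j : {ffun 'I_d -> 'I_K}, forall x, Lam x ->
    exists i, rho <= `|x ord0 i - grid rho j ord0 i|.
Proof.
move=> r0 K0 hc; apply: contrapT => hno.
have h (j : {ffun 'I_d -> 'I_K}) : exists x, Lam x /\ forall i, `|x ord0 i - grid rho j ord0 i| < rho.
  apply: contrapT => hx; apply: hno; exists j => x Lx; apply: contrapT => hi.
  apply: hx; exists x; split => // i; rewrite ltNge; apply/negP => hle.
  by apply: hi; exists i.
have [f hf] := choice h.
have finj : injective f.
  move=> j1 j2 e; apply/ffunP => i; apply/val_inj/nat_close.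
  have [_ h1] := hf j1; have [_ h2] := hf j2.
  have h3 : `|grid rho j1 ord0 i - grid rho j2 ord0 i| < 2 * rho.
    rewrite (_ : _ - _ = (f j1 ord0 i - grid rho j2 ord0 i) - (f j1 ord0 i - grid rho j1 ord0 i)); last by lra.
    apply: le_lt_trans (ler_normB _ _) _.
    by rewrite mulr2n mulrDl mul1r ltrD // e.
  move: h3; rewrite /grid !mxE -mulrBr normrM gtr0_norm ?mulr_gt0 //.
  by rewrite -[X in _ < X]mulr1 ltr_pM2l ?mulr_gt0.
have : (((K ^ d)%:R)%:E <= count_in (Lam `&` box (4 * rho * K%:R)%R))%E.
  apply: le_trans (@count_ge_fsum R d _ (f @` setT) _ _); last 2 first.
  - exact/finite_image/finite_finset.
  - move=> _ [j _ <-]; have [Lf hfj] := hf j; split => // i.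
    apply: (@le_lt_trans _ _ (`|f j ord0 i - grid rho j ord0 i| + `|grid rho j ord0 i|)).
      by rewrite -{1}(subrK (grid rho j ord0 i) (f j ord0 i)) ler_normD.
    apply: (lt_le_trans (ltr_leD (hfj i) (@grid_bound rho K j i r0))).
    have hK : 1 <= K%:R :> R by rewrite ler1n.
    have r0' := ltW r0.
    nra.
  rewrite fsbig_image; last by move=> ? ? _ _; apply: finj.
  rewrite (fsbigE (enum {ffun 'I_d -> 'I_K})) ?enum_uniq //; last first.
    by move=> x _; rewrite mem_enum.
  under eq_bigl do rewrite in_setT.
  rewrite sumEFin lee_fin big_enum /= sumr_const card_ffun !card_ord.
  by rewrite -[X in X <= _]mul1r mulr_natr.
by move=> /(lt_le_trans hc); rewrite ltxx.
Qed.

End S.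

Section S.
Variables (R : realType) (d : nat).

Lemma cont_meas (g : 'rV[R]_d -> R) : continuous g ->
  measurable_fun [set: Rd R d] (g : Rd R d -> R).
Proof.
move=> cg; apply: (measurability _ (measurable_realfun.RGenOpens.measurableE R)).
move=> _ [_ [a [b ->]] <-]; apply: sub_sigma_algebra; rewrite setTI.
by apply: (proj1 (continuousP g)) cg _ (interval_open _ _).
Qed.

Lemma sum_meas (r : seq 'I_d) (F : 'I_d -> Rd R d -> R) :
  (forall i, measurable_fun [set: Rd R d] (F i)) ->
  measurable_fun [set: Rd R d] (fun x => \sum_(i <- r) F i x).
Proof.
move=> hF; elim: r => [|i r IH].
  rewrite (_ : (fun x => _) = cst 0); first exact: measurable_cst.
  by apply: funext => x; rewrite big_nil.
rewrite (_ : (fun x => _) = (F i \+ fun x => \sum_(j <- r) F j x)).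
  exact: measurable_realfun.measurable_funD.
by apply: funext => x; rewrite big_cons.
Qed.

Lemma dotp_meas (t : 'rV[R]_d) :
  measurable_fun [set: Rd R d] (fun x : Rd R d => dotp t x).
Proof.
apply: (@sum_meas _ (fun i (x : Rd R d) => t ord0 i * x ord0 i)) => i.
apply: measurable_realfun.measurable_funM; first exact: measurable_cst.
apply: cont_meas; exact: coord_continuous.
Qed.

Lemma cos_meas (t : 'rV[R]_d) :
  measurable_fun [set: Rd R d] (fun x : Rd R d => cos (2 * pi * dotp t x)).
Proof.
apply: (measurableT_comp (measurable_realfun.continuous_measurable_fun (@continuous_cos R))).
apply: measurable_realfun.measurable_funM; first exact: measurable_cst.
exact: dotp_meas.
Qed.

Lemma sin_meas (t : 'rV[R]_d) :
  measurable_fun [set: Rd R d] (fun x : Rd R d => sin (2 * pi * dotp t x)).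
Proof.
apply: (measurableT_comp (measurable_realfun.continuous_measurable_fun (@continuous_sin R))).
apply: measurable_realfun.measurable_funM; first exact: measurable_cst.
exact: dotp_meas.
Qed.

Lemma dotpB (l t x : 'rV[R]_d) : dotp (l - t) x = dotp l x - dotp t x.
Proof.
by rewrite /dotp -sumrB; apply: eq_bigr => i _; rewrite !mxE mulrBl.
Qed.

Lemma frame_shift (mu : {measure set (Rd R d) -> \bar R}) (phi : Rd R d -> R * R)
    (Lam : set 'rV[R]_d) (A B : R) (t : 'rV[R]_d) :
  in_L2 mu phi ->
  (forall f : Rd R d -> R * R, in_L2 mu f ->
      (A%:E * L2norm2 mu f
         <= \esum_(lam in Lam) (cabs2 (L2inner mu f (expo lam)))%:E)%E) ->
  (A%:E * L2norm2 mu phi <=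
     \esum_(lam in Lam) (cabs2 (fourier_meas mu phi (lam - t)))%:E)%E.
Proof.
move=> [m1 m2 fin] hA.
pose f := fun x => cmul (phi x) (expo t x).
have hn : L2norm2 mu f = L2norm2 mu phi.
  rewrite /L2norm2; congr (integral _ _ _); apply: funext => x.
  rewrite /f /cmul /expo /cabs2 /=; congr EFin.
  set a := 2 * pi * dotp t x.
  rewrite -[RHS]mulr1 -(cos2Dsin2 a); ring.
have fL2 : in_L2 mu f.
  split.
  - rewrite /f /cmul /=; apply: measurable_realfun.measurable_funB;
      apply: measurable_realfun.measurable_funM => //; [exact: cos_meas | exact: sin_meas].
  - rewrite /f /cmul /=; apply: measurable_realfun.measurable_funD;
      apply: measurable_realfun.measurable_funM => //; [exact: sin_meas | exact: cos_meas].
  - by move: hn; rewrite /L2norm2 => ->.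
have e lam : L2inner mu f (expo lam) = fourier_meas mu phi (lam - t).
  rewrite /L2inner /fourier_meas.
  have -> : (fun x => cmul (f x) (cconj (expo lam x))) =
    (fun x => cmul (cos (- (2 * pi * dotp (lam - t) x)),
                    sin (- (2 * pi * dotp (lam - t) x))) (phi x)).
    apply: funext => x; rewrite dotpB.
    have -> : - (2 * pi * (dotp lam x - dotp t x)) =
       2 * pi * dotp t x - 2 * pi * dotp lam x by ring.
    rewrite cosB sinB /f /cmul /cconj /expo /=.
    congr (_, _); ring.
  by [].
rewrite -hn; under eq_esum do rewrite -e.
exact: hA.
Qed.

End S.

Section S.
Variables (R : realType) (d : nat).

Definition cc (C beta rho L : R) (k : nat) : R :=
  if k is m.+1 then C ^+ 2 * expR (- beta * ln (2 ^+ m * L))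
  else C ^+ 2 * expR (- beta * ln rho).

Lemma shell (G : 'rV[R]_d -> R) (C beta L rho : R) (t lam : 'rV[R]_d) :
  0 < L -> 0 < rho -> (forall i, `|t ord0 i| <= L) ->
  (forall s delta, 0 < delta -> delta <= enorm s ->
      G s <= C ^+ 2 * expR (- beta * ln delta)) ->
  (exists i, rho <= `|lam ord0 i - t ord0 i|) ->
  exists k, box (2 ^+ k.+1 * L) lam /\ G (lam - t) <= cc C beta rho L k.
Proof.
move=> L0 r0 tL hdec [i0 hi0].
have [n hb] : exists n, box (2 ^+ n.+1 * L) lam.
  pose m := Num.Def.truncn (enorm lam / L); exists m => i.
  apply: le_lt_trans (enorm_ge_coord lam i) _.
  have h1 := truncnS_gt (enorm lam / L); rewrite -/m in h1.
  rewrite ltr_pdivrMr // in h1; apply: lt_le_trans h1 _.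
  rewrite ler_wpM2r ?(ltW L0) // -natrX ler_nat; apply: ltnW; exact: ltn_expl.
elim: n hb => [|n IH] hb.
  exists 0%N; split => //=; apply: hdec => //; apply: le_trans hi0 _.
  by have := enorm_ge_coord (lam - t) i0; rewrite !mxE.
case: (pselect (box (2 ^+ n.+1 * L) lam)) => [b|nb]; first exact: IH b.
exists n.+1; split => //=.
have [i hi] : exists i, 2 ^+ n.+1 * L <= `|lam ord0 i|.
  apply: contrapT => hn; apply: nb => i; rewrite ltNge; apply/negP => hle.
  by apply: hn; exists i.
have p0 : 0 < 2 ^+ n * L by rewrite mulr_gt0 ?exprn_gt0.
apply: hdec => //.
apply: le_trans (enorm_ge_coord (lam - t) i); rewrite !mxE.
have h1 : `|lam ord0 i| <= `|lam ord0 i - t ord0 i| + `|t ord0 i|.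
  by rewrite -{1}(subrK (t ord0 i) (lam ord0 i)) ler_normD.
have h2 := tL i.
have h3 : 1 <= 2 ^+ n :> R by rewrite exprn_ege1 // ler1n.
move: hi; rewrite exprS; nra.
Qed.

Lemma count_sub (A B : set 'rV[R]_d) : A `<=` B -> (count_in A <= count_in B)%E.
Proof.
move=> AB; apply: ge_ereal_sup => /= _ [X [finX XA]] <-.
by apply: esum_ge; exists X => //; split => //; apply: subset_trans AB.
Qed.

Lemma geo_bound (q : R) (n : nat) : 0 <= q -> q < 1 ->
  \sum_(m < n) q ^+ m <= (1 - q)^-1.
Proof.
move=> q0 q1.
have e : (\sum_(m < n) q ^+ m) * (1 - q) = 1 - q ^+ n.
  elim: n => [|n IH]; first by rewrite big_ord0 mul0r expr0 subrr.
  by rewrite big_ord_recr /= mulrDl IH exprS; ring.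
rewrite -(ler_pM2r (x := 1 - q)) ?subr_gt0 // e mulVf ?gt_eqF ?subr_gt0 //.
by rewrite gerBl exprn_ge0.
Qed.

End S.

Section S.
Variable (R : realType).

Lemma EV (e c : R) : 0 < e -> exists U, forall u, U <= u -> c < expR (e * u).
Proof.
move=> e0; exists (`|c| / e) => u hu.
apply: lt_le_trans (expR_ge1Dx _).
have := ler_wpM2l (ltW e0) hu; rewrite [e * (_ / _)]mulrC divfK ?gt_eqF //.
have := ler_norm c; lra.
Qed.

Lemma SMALL (c0 E0 e eps : R) : e < 0 -> 0 < eps ->
  exists U, forall u, U <= u -> c0 * expR (E0 + e * u) < eps.
Proof.
move=> e0 eps0; have ne : 0 < - e by rewrite oppr_gt0.
have [U hU] := EV (c0 * expR E0 / eps) ne.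
exists U => u hu; have := hU u hu.
rewrite ltr_pdivrMr // expRD mulrA => h.
have p := expR_gt0 (e * u).
rewrite -(ltr_pM2r p) in h; apply: lt_le_trans h _.
by rewrite mulrAC -expRD mulNr addNr expR0 mul1r.
Qed.

Lemma pw (x a : R) : 0 < x -> x `^ a = expR (a * ln x).
Proof. by move=> x0; rewrite /powR gt_eqF. Qed.

Lemma theta_ex (alpha beta D : R) : 0 < alpha -> 0 < beta -> 0 < D ->
  alpha * (beta + D) < beta * D ->
  exists theta, [/\ 0 < theta, alpha < theta * (beta - alpha) &
                    alpha * theta < D - alpha].
Proof.
move=> a0 b0 D0 h.
have ab : alpha < beta by nra.
have aD : alpha < D by nra.
have ba : 0 < beta - alpha by lra.
pose x := alpha / (beta - alpha); pose y := (D - alpha) / alpha.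
have hx : x * (beta - alpha) = alpha by rewrite /x divfK ?gt_eqF.
have hy : y * alpha = D - alpha by rewrite /y divfK ?gt_eqF.
have hy2 : alpha < y * (beta - alpha).
  rewrite -(ltr_pM2l a0) mulrA [alpha * y]mulrC hy; nra.
have xy : x < y by rewrite -(ltr_pM2r ba) hx.
have x0 : 0 < x by rewrite /x divr_gt0.
exists ((x + y) / 2); split.
- by apply: divr_gt0 => //; lra.
- have -> : (x + y) / 2 * (beta - alpha) = (x * (beta - alpha) + y * (beta - alpha)) / 2.
    by rewrite mulrAC mulrDl.
  rewrite hx; lra.
- have -> : alpha * ((x + y) / 2) = (alpha * x + y * alpha) / 2 by rewrite mulrA mulrDr [alpha * y]mulrC.
  rewrite hy; nra.
Qed.

End S.

Section S.
Variable (R : realType).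

Lemma core (d : nat) (G : 'rV[R]_d -> R) (Lam : set 'rV[R]_d)
    (beta C AP C' alpha : R) :
  0 < beta -> (0 < d)%N -> 0 < alpha -> alpha * (beta + d%:R) < beta * d%:R ->
  0 <= C -> 0 < AP -> 0 <= C' ->
  (forall t, (AP%:E <= \esum_(lam in Lam) (G (lam - t))%:E)%E) ->
  (forall s, 0 <= G s) ->
  (forall s delta, 0 < delta -> delta <= enorm s ->
      G s <= C ^+ 2 * expR (- beta * ln delta)) ->
  (forall r, 1 <= r -> (count_in (Lam `&` eball0 r) <= (C' * r `^ alpha)%:E)%E) ->
  False.
Proof.
move=> b0 d0 a0 hab C0 AP0 C'0 hfr G0 hdec hcnt.
set D : R := d%:R.
have D1 : 1 <= D by rewrite ler1n.
have D0 : 0 < D by lra.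
have [th [th0 th1 th2]] := theta_ex a0 b0 D0 hab.
set l2 := ln (2 : R).
have l20 : 0 < l2 by apply: ln_gt0; lra.
set lD := ln D.
set q := expR ((alpha - beta) * l2).
have q0 : 0 <= q by apply: expR_ge0.
have q1 : q < 1 by rewrite /q -expR0 ltr_expR; nra.
have e1 : alpha * (1 + th) - D < 0 by lra.
have e2 : alpha * (1 + th) - beta * th < 0 by lra.
have e3 : (alpha - beta) * (1 + th) < 0 by nra.
have AP2 : 0 < AP / 2 by lra.
have [U1 hU1] := SMALL C' (alpha * (lD + 2 * l2)) e1 ltr01.
have [U2 hU2] := SMALL (C ^+ 2 * C') (alpha * (lD + 2 * l2)) e2 AP2.
have [U3 hU3] := SMALL (C ^+ 2 * C' / (1 - q))
  (alpha * lD + 2 * alpha * l2 + (alpha - beta) * l2) e3 AP2.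
pose Us := Num.max (Num.max U1 U2) (Num.max U3 0).
pose K := (Num.Def.truncn (expR Us)).+1.
have K0 : 0 < K%:R :> R by rewrite ltr0n.
pose u := ln (K%:R : R).
have hu : Us < u.
  rewrite /u -[X in X < _](expRK Us) ltr_ln ?posrE ?expR_gt0 //.
  exact: truncnS_gt.
have u1 : U1 <= u by apply/ltW/(le_lt_trans _ hu); rewrite !le_max lexx.
have u2 : U2 <= u by apply/ltW/(le_lt_trans _ hu); rewrite !le_max lexx orbT.
have u3 : U3 <= u by apply/ltW/(le_lt_trans _ hu); rewrite !le_max lexx orbT.
have u0 : 0 <= u by apply/ltW/(le_lt_trans _ hu); rewrite !le_max lexx !orbT.
have eK : K%:R = expR u by rewrite /u lnK ?posrE.
pose rho := expR (th * u).
have rho1 : 1 <= rho by apply: le_trans (expR_ge1Dx _); nra.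
have rho0 : 0 < rho by lra.
pose L := 2 * rho * K%:R.
have K1 : 1 <= K%:R :> R by rewrite ler1n.
have L0 : 2 <= L by rewrite /L; nra.
have eD : D = expR lD by rewrite /lD lnK // posrE.
have e2' : (2:R) = expR l2 by rewrite /l2 lnK //; rewrite posrE; lra.
have eL : L = expR (l2 + th * u + u) by rewrite !expRD /L -e2' -eK.
have lL : ln L = l2 + th * u + u by rewrite eL expRK.
have lnr (k : nat) : ln (D * (2 ^+ k * L)) = lD + k%:R * l2 + ln L.
  rewrite {1}eD {1}e2' {1}eL -expRM_natr -!expRD expRK lL; ring.
have p2 : (0:R) < 2 by lra.
pose r (k : nat) := 2 ^+ k.+1 * L.
have r1 k : 1 <= D * r k.
  have : 1 <= 2 ^+ k.+1 :> R by rewrite exprn_ege1 // ler1n.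
  move=> h; have : 1 <= r k by rewrite /r; nra.
  nra.
have r0 k : 0 < r k by rewrite /r mulr_gt0 ?exprn_gt0 //; lra.
pose N (k : nat) := C' * (D * r k) `^ alpha.
have hN k : (count_in (Lam `&` box (r k)) <= (N k)%:E)%E.
  apply: le_trans (hcnt _ (r1 k)); apply: count_sub.
  by move=> x [Lx bx]; split => //; rewrite /eball0 /=; exact: box_ball.
have Ne k : N k = C' * expR (alpha * (lD + (k.+1)%:R * l2 + ln L)).
  by rewrite /N pw ?mulr_gt0 ?r0 // /r lnr.
have hpig : (count_in (Lam `&` box (4 * rho * K%:R)%R) < ((K ^ d)%:R)%:E)%E.
  have -> : 4 * rho * K%:R = r 0%N by rewrite /r /L expr1; ring.
  apply: le_lt_trans (hN 0%N) _; rewrite lte_fin Ne natrX eK -expRM_natr.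
  have h := hU1 u u1.
  rewrite (_ : alpha * _ = (alpha * (lD + 2 * l2) + (alpha * (1 + th) - D) * u) + u * D).
    by rewrite expRD mulrA -[X in _ < X]mul1r ltr_pM2r ?expR_gt0.
  by rewrite lL; ring.
have [j hj] := pigeon rho0 (ltn0Sn _) hpig.
pose t := grid rho j.
have tL i : `|t ord0 i| <= L by rewrite /t /L; apply: grid_bound.
have L0' : 0 < L by lra.
have hk lam : exists k, Lam lam ->
    box (r k) lam /\ G (lam - t) <= cc C beta rho L k.
  case: (pselect (Lam lam)) => [Ll|nL]; last by exists 0%N.
  have [k hk] := shell L0' rho0 tL hdec (hj lam Ll).
  by exists k => _.
have [kf hkf] := choice hk.
pose c := cc C beta rho L.
have c0 k : 0 <= c k by case: k => [|k]; rewrite /c /cc mulr_ge0 ?sqr_ge0 ?expR_ge0.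
pose E1 := alpha * lD + 2 * alpha * l2 + (alpha - beta) * ln L.
pose T0 := c 0%N * N 0%N.
pose T1 := C ^+ 2 * C' * expR E1 / (1 - q).
have q1' : 0 < 1 - q by lra.
have T00 : 0 <= T0 by rewrite /T0 mulr_ge0 // Ne mulr_ge0 ?expR_ge0.
have T10 : 0 <= T1 by rewrite /T1 divr_ge0 ?mulr_ge0 ?sqr_ge0 ?expR_ge0 // ltW.
have hS n : \sum_(k < n) c k * N k <= T0 + T1.
  case: n => [|m]; first by rewrite big_ord0; lra.
  rewrite big_ord_recl lerD //.
  have -> : \sum_(i < m) c (lift ord0 i) * N (lift ord0 i) =
            \sum_(i < m) (C ^+ 2 * C' * expR E1) * q ^+ i.
    apply: eq_bigr => i _; rewrite /= /bump /= add1n /c /cc Ne.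
    have li : ln (2 ^+ i * L) = i%:R * l2 + ln L.
      rewrite {1}e2' {1}eL -expRM_natr -expRD expRK lL; ring.
    rewrite li /q -expRM_natr.
    have n2 : ((i.+2)%:R : R) = i%:R + 2 by rewrite -addn2 natrD.
    rewrite n2.
    rewrite (_ : C ^+ 2 * expR (- beta * (i%:R * l2 + ln L)) *
       (C' * expR (alpha * (lD + (i%:R + 2) * l2 + ln L))) =
       C ^+ 2 * C' * expR (- beta * (i%:R * l2 + ln L) + alpha * (lD + (i%:R + 2) * l2 + ln L))); last first.
      by rewrite expRD; ring.
    rewrite -[in RHS]mulrA -[in RHS]expRD; congr (_ * expR _); rewrite /E1; ring.
  rewrite -mulr_sumr /T1 ler_wpM2l ?geo_bound //.
  by rewrite mulr_ge0 ?expR_ge0 // mulr_ge0 ?sqr_ge0.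
have hL x : Lam x -> [/\ box (r (kf x)) x, 0 <= G (x - t) & G (x - t) <= c (kf x)].
  by move=> Lx; have [bx gx] := hkf x Lx; split.
have hkey := key (Lam := Lam) (g := fun lam => G (lam - t)) (kf := kf) (c := c) (N := N)
  (B := fun k => box (r k)) (S := T0 + T1) c0 hL hN hS.
have := le_trans (hfr t) hkey; rewrite lee_fin.
have hT0 : T0 < AP / 2.
  have h := hU2 u u2.
  rewrite /T0 /c /cc Ne /rho expRK.
  rewrite (_ : C ^+ 2 * expR (- beta * (th * u)) * (C' * expR (alpha * (lD + 1 * l2 + ln L)))
     = C ^+ 2 * C' * expR (- beta * (th * u) + alpha * (lD + 1 * l2 + ln L))); last first.
    by rewrite expRD; ring.
  apply: le_lt_trans h; rewrite le_eqVlt; apply/orP; left; apply/eqP.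
  by congr (_ * expR _); rewrite lL; ring.
have hT1 : T1 < AP / 2.
  have h := hU3 u u3.
  rewrite /T1; apply: le_lt_trans h; rewrite le_eqVlt; apply/orP; left; apply/eqP.
  by rewrite mulrAC; congr (_ * expR _); rewrite /E1 lL; ring.
lra.
Qed.

End S.

Unset Implicit Arguments. Set Strict Implicit.

Theorem lemma3p2 (R : realType) (d : nat)
    (mu : {finite_measure set (Rd R d) -> \bar R}) (beta : R) :
  0 < beta -> beta <= d%:R ->
  (exists phi : Rd R d -> R * R,
      [/\ in_L2 mu phi, (0 < L2norm2 mu phi)%E &
        exists C : R, 0 < C /\
          forall t : 'rV[R]_d, t != 0 ->
            cabs (fourier_meas mu phi t) <= C * enorm t `^ (- (beta / 2))]) ->
  forall Lam : set 'rV[R]_d, countable Lam -> fourier_frame mu Lam ->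
  forall alpha : R,
    (exists C' : R, forall r : R, 1 <= r ->
        (count_in (Lam `&` eball0 r) <= (C' * r `^ alpha)%:E)%E) ->
    (beta^-1 + (d%:R)^-1)^-1 <= alpha.
Proof.
move=> b0 bd [phi [hL2 hpos [C [C0 hF]]]] Lam _ [A [B [A0 B0 hfr]]] alpha [C' hC].
have d0 : (0 < d)%N by rewrite -(ltr0n R); exact: lt_le_trans b0 bd.
set D : R := d%:R.
have D0 : 0 < D by rewrite ltr0n.
set gam := (beta^-1 + D^-1)^-1.
have gamE : gam * (beta + D) = beta * D.
  by rewrite /gam; field; rewrite -/D !gt_eqF // addr_gt0.
have gam0 : 0 < gam by rewrite /gam invr_gt0 addr_gt0 ?invr_gt0.
rewrite leNgt; apply/negP => halt.
have C'0 : 0 <= C'.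
  have := hC 1 (lexx _); rewrite powR1 mulr1 => h.
  rewrite -lee_fin; apply: le_trans h; apply: esum_ge0 => x _; exact: lee01.
pose a := Num.max alpha (gam / 2).
have aa : alpha <= a by rewrite /a le_max lexx.
have a0 : 0 < a by apply: lt_le_trans (_ : 0 < gam / 2) _; [lra | rewrite /a le_max lexx orbT].
have ag : a < gam by rewrite /a gt_max halt /=; lra.
have hab : a * (beta + D) < beta * D by rewrite -gamE ltr_pM2r //; lra.
have [fin1 fin2] : (L2norm2 mu phi \is a fin_num) /\ (0 <= L2norm2 mu phi)%E.
  have ge0 : (0 <= L2norm2 mu phi)%E by apply: ltW.
  split => //; rewrite ge0_fin_numE //; by case: hL2.
pose P := fine (L2norm2 mu phi).
have eP : L2norm2 mu phi = P%:E by rewrite /P fineK.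
have P0 : 0 < P by rewrite -lte_fin -eP.
apply: (@core R d (fun s => cabs2 (fourier_meas mu phi s)) Lam beta C (A * P) C' a) => //.
- exact: ltW.
- exact: mulr_gt0.
- move=> t; rewrite EFinM -eP; apply: frame_shift => // f hf; exact: (hfr f hf).1.
- by move=> s; apply: cabs2_ge0.
- by apply: decay => //; exact: ltW.
- move=> r r1; apply: le_trans (hC r r1) _; rewrite lee_fin ler_wpM2l //.
  exact: ler_powR.
Qed.
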